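(* Let $z_1(x)=2e^{1-\frac{1}{1-(x/\pi)^2}}-1$ on $[-\pi,\pi]$ (with $z_1$ and all its derivatives extended continuously to $x=\pm\pi$), and let $\epsilon=\frac1{128}$. Then for each $k\in\{0,1,2,3,4,5\}$: for every $x\in[-\pi,-\pi+\epsilon]$, $\partial_x^k z_1(x)$ lies between $\partial_x^k z_1(-\pi)$ and $\partial_x^k z_1(-\pi+\epsilon)$ (in their convex hull), and for every $x\in[\pi-\epsilon,\pi]$, $\partial_x^k z_1(x)$ lies between $\partial_x^k z_1(\pi-\epsilon)$ and $\partial_x^k z_1(\pi)$. *)

(* Defs.v *)
From Stdlib Require Import Reals Lra.
From Coquelicot Require Import Coquelicot.
Open Scope R_scope.

(* The extension is C^infinity on R
   (a standard bump function), and its derivatives at +-pi equal the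
   continuous extensions (all 0) of the derivatives from inside. *)
Definition z1 (x : R) : R :=
  if Rlt_dec (Rabs x) PI then 2 * exp (1 - 1 / (1 - (x / PI) ^ 2)) - 1
  else -1.

Definition eps : R := 1 / 128.

Definition between (a b v : R) : Prop := Rmin a b <= v <= Rmax a b.

(* Main.v *)
Require Import Defs.
From Stdlib Require Import Reals Lra Lia.
From Coquelicot Require Import Coquelicot.
Open Scope R_scope.

Definition P (k : nat) (u : R) : R :=
  match k with
  | 0 => 1
  | 1 => (-2)*u^1
  | 2 => (-2) + 6*u^4
  | 3 => (-12)*u^1 + 40*u^3 + (-12)*u^5 + (-24)*u^7
  | 4 => (-12) + 24*u^2 + 232*u^4 + (-528)*u^6 + 180*u^8 + 120*u^10
  | 5 => (-120)*u^1 + 1360*u^3 + (-2112)*u^5 + (-2400)*u^7 + 6120*u^9 + (-2160)*u^11 + (-720)*u^13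
  | 6 => (-120) + 2160*u^2 + 8040*u^4 + (-56816)*u^6 + 77160*u^8 + 7440*u^10 + (-68040)*u^12 + 25200*u^14 + 5040*u^16
  | _ => 0
  end.

Definition dP (k : nat) (u : R) : R :=
  match k with
  | 0 => 0
  | 1 => (-2)
  | 2 => 24*u^3
  | 3 => (-12) + 120*u^2 + (-60)*u^4 + (-168)*u^6
  | 4 => 48*u^1 + 928*u^3 + (-3168)*u^5 + 1440*u^7 + 1200*u^9
  | 5 => (-120) + 4080*u^2 + (-10560)*u^4 + (-16800)*u^6 + 55080*u^8 + (-23760)*u^10 + (-9360)*u^12
  | 6 => 4320*u^1 + 32160*u^3 + (-340896)*u^5 + 617280*u^7 + 74400*u^9 + (-816480)*u^11 + 352800*u^13 + 80640*u^15
  | _ => 0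
  end.

Lemma PL0 (v : R) : P 0 (v + (-1)) = 1.
Proof. simpl. ring. Qed.

Lemma PL1 (v : R) : P 1 (v + (-1)) = 2 + (-2)*v^1.
Proof. simpl. ring. Qed.

Lemma PL2 (v : R) : P 2 (v + (-1)) = 4 + (-24)*v^1 + 36*v^2 + (-24)*v^3 + 6*v^4.
Proof. simpl. ring. Qed.

Lemma PL3 (v : R) : P 3 (v + (-1)) = 8 + (-120)*v^1 + 504*v^2 + (-920)*v^3 + 900*v^4 + (-516)*v^5 + 168*v^6 + (-24)*v^7.
Proof. simpl. ring. Qed.

Lemma PL4 (v : R) : P 4 (v + (-1)) = 16 + (-448)*v^1 + 3936*v^2 + (-14848)*v^3 + 30112*v^4 + (-37152)*v^5 + 29712*v^6 + (-15840)*v^7 + 5580*v^8 + (-1200)*v^9 + 120*v^10.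
Proof. simpl. ring. Qed.

Lemma PL5 (v : R) : P 5 (v + (-1)) = 32 + (-1440)*v^1 + 22080*v^2 + (-152000)*v^3 + 551040*v^4 + (-1205952)*v^5 + 1736160*v^6 + (-1730400)*v^7 + 1227960*v^8 + (-627480)*v^9 + 229680*v^10 + (-58320)*v^11 + 9360*v^12 + (-720)*v^13.
Proof. simpl. ring. Qed.

Lemma PL6 (v : R) : P 6 (v + (-1)) = 64 + (-4224)*v^1 + 100800*v^2 + (-1136000)*v^3 + 6837600*v^4 + (-24432384)*v^5 + 56833024*v^6 + (-91766400)*v^7 + 107272560*v^8 + (-93213600)*v^9 + 61102320*v^10 + (-30371040)*v^11 + 11397960*v^12 + (-3175200)*v^13 + 630000*v^14 + (-80640)*v^15 + 5040*v^16.
Proof. simpl. ring. Qed.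

Lemma PR0 (v : R) : (-1)^0 * P 0 (1 - v) = 1.
Proof. simpl. ring. Qed.

Lemma PR1 (v : R) : (-1)^1 * P 1 (1 - v) = 2 + (-2)*v^1.
Proof. simpl. ring. Qed.

Lemma PR2 (v : R) : (-1)^2 * P 2 (1 - v) = 4 + (-24)*v^1 + 36*v^2 + (-24)*v^3 + 6*v^4.
Proof. simpl. ring. Qed.

Lemma PR3 (v : R) : (-1)^3 * P 3 (1 - v) = 8 + (-120)*v^1 + 504*v^2 + (-920)*v^3 + 900*v^4 + (-516)*v^5 + 168*v^6 + (-24)*v^7.
Proof. simpl. ring. Qed.

Lemma PR4 (v : R) : (-1)^4 * P 4 (1 - v) = 16 + (-448)*v^1 + 3936*v^2 + (-14848)*v^3 + 30112*v^4 + (-37152)*v^5 + 29712*v^6 + (-15840)*v^7 + 5580*v^8 + (-1200)*v^9 + 120*v^10.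
Proof. simpl. ring. Qed.

Lemma PR5 (v : R) : (-1)^5 * P 5 (1 - v) = 32 + (-1440)*v^1 + 22080*v^2 + (-152000)*v^3 + 551040*v^4 + (-1205952)*v^5 + 1736160*v^6 + (-1730400)*v^7 + 1227960*v^8 + (-627480)*v^9 + 229680*v^10 + (-58320)*v^11 + 9360*v^12 + (-720)*v^13.
Proof. simpl. ring. Qed.

Lemma PR6 (v : R) : (-1)^6 * P 6 (1 - v) = 64 + (-4224)*v^1 + 100800*v^2 + (-1136000)*v^3 + 6837600*v^4 + (-24432384)*v^5 + 56833024*v^6 + (-91766400)*v^7 + 107272560*v^8 + (-93213600)*v^9 + 61102320*v^10 + (-30371040)*v^11 + 11397960*v^12 + (-3175200)*v^13 + 630000*v^14 + (-80640)*v^15 + 5040*v^16.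
Proof. simpl. ring. Qed.

Lemma powb (v h : R) (n : nat) : 0 <= v <= h -> h <= 1 -> 0 <= v ^ S n <= h ^ n * v.
Proof.
  intros [H0 H1] Hh. induction n.
  - simpl. lra.
  - destruct IHn as [A B]. change (v ^ S (S n)) with (v * v ^ S n).
    change (h ^ S n) with (h * h ^ n). split. nra.
    assert (0 <= h ^ n) by (apply pow_le; lra). nra.
Qed.

Lemma powu (u : R) (n : nat) : -1 <= u <= 1 -> -1 <= u ^ n <= 1.
Proof.
  intros Hu. assert (Rabs u <= 1) by (apply Rabs_le; lra).
  assert (Rabs (u ^ n) <= 1).
  { rewrite <- RPow_abs. replace 1 with (1 ^ n) by apply pow1.
    apply pow_incr. split; [apply Rabs_pos|lra]. }
  apply Rabs_le_between in H0. lra.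
Qed.

Ltac powbs v :=
  let h := constr:(/384) in
  assert (Hh1 : h <= 1) by lra;
  pose proof (powb v h 1 ltac:(lra) Hh1);
  pose proof (powb v h 2 ltac:(lra) Hh1);
  pose proof (powb v h 3 ltac:(lra) Hh1);
  pose proof (powb v h 4 ltac:(lra) Hh1);
  pose proof (powb v h 5 ltac:(lra) Hh1);
  pose proof (powb v h 6 ltac:(lra) Hh1);
  pose proof (powb v h 7 ltac:(lra) Hh1);
  pose proof (powb v h 8 ltac:(lra) Hh1);
  pose proof (powb v h 9 ltac:(lra) Hh1);
  pose proof (powb v h 10 ltac:(lra) Hh1);
  pose proof (powb v h 11 ltac:(lra) Hh1);
  pose proof (powb v h 12 ltac:(lra) Hh1);
  pose proof (powb v h 13 ltac:(lra) Hh1);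
  pose proof (powb v h 14 ltac:(lra) Hh1);
  pose proof (powb v h 15 ltac:(lra) Hh1);
  assert (v ^ 1 = v) by ring.

Lemma PsignL (k : nat) (u : R) : (k <= 6)%nat -> -1 < u <= -1 + /384 -> 0 < P k u.
Proof.
  intros Hk Hu. set (v := u + 1).
  replace u with (v + (-1)) by (unfold v; ring).
  assert (0 < v <= /384) by (unfold v; lra). clearbody v.
  powbs v.
  destruct k as [|[|[|[|[|[|[|k]]]]]]]; try lia;
  [rewrite PL0|rewrite PL1|rewrite PL2|rewrite PL3|rewrite PL4|rewrite PL5|rewrite PL6]; lra.
Qed.

Lemma PsignR (k : nat) (u : R) : (k <= 6)%nat -> 1 - /384 <= u < 1 -> 0 < (-1)^k * P k u.
Proof.
  intros Hk Hu. set (v := 1 - u).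
  replace u with (1 - v) by (unfold v; ring).
  assert (0 < v <= /384) by (unfold v; lra). clearbody v.
  powbs v.
  destruct k as [|[|[|[|[|[|[|k]]]]]]]; try lia;
  [rewrite PR0|rewrite PR1|rewrite PR2|rewrite PR3|rewrite PR4|rewrite PR5|rewrite PR6]; lra.
Qed.

Lemma Pbound (k : nat) (u : R) : -1 <= u <= 1 -> Rabs (P k u) <= 300000.
Proof.
  intros Hu. apply Rabs_le.
  pose proof (powu u 1 Hu); pose proof (powu u 2 Hu); pose proof (powu u 3 Hu);
  pose proof (powu u 4 Hu); pose proof (powu u 5 Hu); pose proof (powu u 6 Hu);
  pose proof (powu u 7 Hu); pose proof (powu u 8 Hu); pose proof (powu u 9 Hu);
  pose proof (powu u 10 Hu); pose proof (powu u 11 Hu); pose proof (powu u 12 Hu);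
  pose proof (powu u 13 Hu); pose proof (powu u 14 Hu); pose proof (powu u 15 Hu);
  pose proof (powu u 16 Hu).
  destruct k as [|[|[|[|[|[|[|k]]]]]]]; simpl P; lra.
Qed.

Lemma Pder (k : nat) (u : R) : is_derive (P k) u (dP k u).
Proof.
  change (is_derive (fun u => P k u) u (dP k u)).
  destruct k as [|[|[|[|[|[|[|k]]]]]]]; unfold P, dP;
  auto_derive; auto; ring.
Qed.

Lemma Prec (k : nat) (u : R) : (k <= 5)%nat ->
  P (S k) u = dP k u * (1-u^2)^2 + 4 * INR k * u * (1-u^2) * P k u - 2*u*P k u.
Proof.
  intros Hk. destruct k as [|[|[|[|[|[|k]]]]]]; try lia; simpl P; simpl dP; simpl INR; ring.
Qed.
Lemma predpow (n : nat) (Q : R) : Q <> 0 -> INR n * Q ^ Init.Nat.pred n = INR n * Q ^ n / Q.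
Proof. intros HQ. destruct n; simpl. field. auto. field. auto. Qed.

Lemma qpos x : Rabs x < PI -> 0 < 1 - (x/PI)^2.
Proof.
  intros Hx. pose proof PI_RGT_0.
  assert (x^2 < PI^2) by (rewrite <- pow2_abs; pose proof (Rabs_pos x); nra).
  replace ((x/PI)^2) with (x^2/PI^2) by (field; lra).
  apply Rlt_Rminus. apply (Rmult_lt_reg_r (PI^2)). nra. field_simplify; lra.
Qed.

Lemma step (k : nat) (P dP P1 : R -> R) (x : R) :
  Rabs x < PI ->
  (forall u, is_derive P u (dP u)) ->
  (forall u, P1 u = dP u * (1-u^2)^2 + 4 * INR k * u * (1-u^2) * P u - 2*u*P u) ->
  is_derive (fun x => 2 * exp (1 - 1/(1-(x/PI)^2)) * P (x/PI) / (PI^k * (1-(x/PI)^2)^(2*k))) x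
   (2 * exp (1 - 1/(1-(x/PI)^2)) * P1 (x/PI) / (PI^(S k) * (1-(x/PI)^2)^(2*(S k)))).
Proof.
  intros Hx HP HP1.
  pose proof (qpos x Hx) as Hq. pose proof PI_RGT_0.
  assert (EQ: 1 + - (x * / PI * (x * / PI * 1)) = 1 - (x/PI)^2) by (unfold Rdiv; ring).
  auto_derive.
  { rewrite EQ. repeat split; try lra.
    - exists (dP (x * / PI)). apply HP.
    - apply Rmult_integral_contrapositive; split; apply pow_nonzero; lra. }
  rewrite EQ.
  rewrite (is_derive_unique _ _ _ (HP _)).
  rewrite predpow by lra.
  change (x * / PI) with (x / PI).
  rewrite HP1.
  replace (2 * S k)%nat with ((k + (k+0)) + 2)%nat by lia.
  rewrite plus_INR, plus_INR. simpl INR.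
  replace (1 * / PI) with (/PI) by ring.
  replace (1 + - (1 * / (1 - (x / PI) ^ 2))) with (1 - 1 / (1 - (x / PI) ^ 2)) by (unfold Rdiv; ring).
  set (E := exp _).
  set (Q := 1 - (x/PI)^2) in *.
  set (A := Q ^ (k + (k + 0))).
  rewrite (pow_add Q (k+(k+0)) 2). fold A.
  change (PI ^ S k) with (PI * PI ^ k).
  assert (0 < A) by (apply pow_lt; lra).
  assert (0 < PI ^ k) by (apply pow_lt; lra).
  set (B := PI ^ k) in *.
  field. 
  repeat split; lra.
Qed.

Lemma exp_n (a : R) (n : nat) : exp (INR n * a) = exp a ^ n.
Proof.
  induction n.
  - simpl. rewrite Rmult_0_l. apply exp_0.
  - rewrite S_INR. replace ((INR n + 1) * a) with (INR n * a + a) by ring.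
    rewrite exp_plus, IHn. simpl. ring.
Qed.

Lemma exp_lb (N : nat) (z : R) : (0 < N)%nat -> 0 < z -> (z / INR N) ^ N <= exp z.
Proof.
  intros HN Hz. assert (0 < INR N) by (apply lt_0_INR; lia).
  replace z with (INR N * (z / INR N)) at 2 by (field; lra).
  rewrite exp_n. apply pow_incr. split.
  - apply Rlt_le, Rdiv_lt_0_compat; lra.
  - assert (z / INR N <> 0) by (apply Rgt_not_eq, Rdiv_lt_0_compat; lra).
    pose proof (exp_ineq1 _ H0). lra.
Qed.

Lemma exp_ub (N : nat) (a : R) : (0 < N)%nat -> 0 < a ->
  exp (1 - 1/a) <= exp 1 * (INR N) ^ N * a ^ N.
Proof.
  intros HN Ha. assert (0 < INR N) by (apply lt_0_INR; lia).
  unfold Rminus. rewrite exp_plus, exp_Ropp.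
  rewrite Rmult_assoc. apply Rmult_le_compat_l. left; apply exp_pos.
  pose proof (exp_lb N (1/a) HN ltac:(apply Rdiv_lt_0_compat; lra)).
  assert (0 < (1 / a / INR N) ^ N) by (apply pow_lt; apply Rdiv_lt_0_compat; [apply Rdiv_lt_0_compat|]; lra).
  apply (Rle_trans _ (/ ((1 / a / INR N) ^ N))).
  - apply Rinv_le_contravar; lra.
  - rewrite <- pow_inv. rewrite <- Rpow_mult_distr. right. f_equal. field. lra.
Qed.

Definition Dint (k : nat) (x : R) : R :=
  2 * exp (1 - 1/(1-(x/PI)^2)) * P k (x/PI) / (PI^k * (1-(x/PI)^2)^(2*k)).

Definition cst (k : nat) : R := match k with O => 1 | _ => 0 end.

Definition Dz (k : nat) (x : R) : R :=
  if Rlt_dec (Rabs x) PI then Dint k x - cst k else - cst k.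

Lemma Dint_bound (k : nat) (x : R) : Rabs x < PI ->
  Rabs (Dint k x) <= 2 * exp 1 * INR (2*k+2) ^ (2*k+2) * 300000 * (1-(x/PI)^2)^2.
Proof.
  intros Hx. pose proof (qpos x Hx) as Hq. pose proof PI_RGT_0.
  assert (Hu : -1 <= x/PI <= 1).
  { apply Rabs_le_between. unfold Rdiv. rewrite Rabs_mult, Rabs_inv, (Rabs_right PI) by lra.
    apply (Rmult_le_reg_r PI); [lra|]. field_simplify; lra. }
  pose proof (Pbound k _ Hu) as HP.
  set (a := 1 - (x/PI)^2) in *.
  assert (Ha1 : a <= 1) by (unfold a; pose proof (pow2_ge_0 (x/PI)); lra).
  pose proof (exp_ub (2*k+2) a ltac:(lia) Hq) as HE.
  set (E := exp (1 - 1/a)) in *.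
  set (M := INR (2*k+2) ^ (2*k+2)) in *.
  assert (HE0 : 0 < E) by apply exp_pos.
  assert (HPk : 1 <= PI ^ k).
  { replace 1 with (1 ^ k) by apply pow1. apply pow_incr. pose proof PI2_3_2. lra. }
  assert (HA : 0 < a ^ (2*k)) by (apply pow_lt; lra).
  rewrite pow_add in HE.
  set (A := a ^ (2*k)) in *.
  unfold Dint. fold a. fold E. fold A.
  set (p := P k (x/PI)) in *.
  unfold Rdiv. rewrite !Rabs_mult, Rabs_inv.
  rewrite (Rabs_right 2) by lra. rewrite (Rabs_right E) by lra.
  rewrite (Rabs_right (PI^k * A)) by nra.
  assert (0 <= Rabs p) by apply Rabs_pos.
  assert (HB: / (PI ^ k * A) <= / A).
  { apply Rinv_le_contravar; nra. }
  assert (0 < / (PI^k * A)) by (apply Rinv_0_lt_compat; nra).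
  apply (Rle_trans _ (2 * E * Rabs p * / A)).
  { apply Rmult_le_compat_l; [|exact HB]. pose proof (Rabs_pos p). nra. }
  apply (Rle_trans _ (2 * (exp 1 * M * (A * a ^ 2)) * 300000 * / A)).
  { apply Rmult_le_compat_r. left; apply Rinv_0_lt_compat; lra.
    apply Rmult_le_compat; try nra. }
  right. field. lra.
Qed.

Lemma deriv0 (f : R -> R) (x0 C d : R) : 0 < d -> 0 <= C ->
  (forall y, Rabs (y - x0) < d -> Rabs (f y - f x0) <= C * (y - x0)^2) ->
  is_derive f x0 0.
Proof.
  intros Hd HC H. apply is_derive_Reals. intros e He.
  assert (0 < Rmin d (e / (C+1))) by (apply Rmin_pos; [lra| apply Rdiv_lt_0_compat; lra]).
  exists (mkposreal _ H0). simpl. intros h Hh0 Hh.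
  assert (Hd' : Rabs h < d) by (pose proof (Rmin_l d (e/(C+1))); lra).
  assert (He' : Rabs h < e / (C+1)) by (pose proof (Rmin_r d (e/(C+1))); lra).
  specialize (H (x0 + h)). replace (x0 + h - x0) with h in H by ring.
  specialize (H Hd').
  rewrite Rminus_0_r. unfold Rdiv. rewrite Rabs_mult, Rabs_inv.
  assert (0 < Rabs h) by (apply Rabs_pos_lt; auto).
  apply (Rle_lt_trans _ (C * h^2 * / Rabs h)).
  { apply Rmult_le_compat_r; [left; apply Rinv_0_lt_compat; lra| lra]. }
  rewrite <- pow2_abs. replace (C * Rabs h ^ 2 * / Rabs h) with (C * Rabs h) by (field; lra).
  apply (Rle_lt_trans _ (C * (e / (C+1)))). nra.
  apply (Rmult_lt_reg_r (C+1)); [lra|]. field_simplify; nra.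
Qed.

Lemma ball_R (x y : R) (e : posreal) : ball x e y -> Rabs (y - x) < e.
Proof. intros H. exact H. Qed.

Lemma tri1 (x y : R) : Rabs (y - x) < PI - Rabs x -> Rabs y < PI.
Proof. intros H. pose proof (Rabs_triang (y - x) x). replace (y - x + x) with y in H0 by ring. lra. Qed.

Lemma tri2 (x y : R) : Rabs (y - x) < Rabs x - PI -> PI < Rabs y.
Proof. intros H. pose proof (Rabs_triang (x - y) y). replace (x - y + y) with x in H0 by ring.
  rewrite Rabs_minus_sym in H. lra. Qed.

Lemma loc_lt (x : R) : Rabs x < PI -> locally x (fun t => Rabs t < PI).
Proof.
  intros Hx. assert (0 < PI - Rabs x) by lra.
  exists (mkposreal _ H). intros y Hy. apply ball_R in Hy. simpl in Hy.
  apply (tri1 x y). lra.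
Qed.

Lemma loc_gt (x : R) : PI < Rabs x -> locally x (fun t => PI < Rabs t).
Proof.
  intros Hx. assert (0 < Rabs x - PI) by lra.
  exists (mkposreal _ H). intros y Hy. apply ball_R in Hy. simpl in Hy.
  apply (tri2 x y). lra.
Qed.

Lemma Dint_deriv (k : nat) (x : R) : (k <= 5)%nat -> Rabs x < PI ->
  is_derive (Dint k) x (Dint (S k) x).
Proof.
  intros Hk Hx. unfold Dint. apply (step k (P k) (dP k) (P (S k)) x Hx).
  - intros; apply Pder.
  - intros; apply Prec; auto.
Qed.

Lemma qle (y x0 : R) : Rabs y < PI -> (x0 = PI \/ x0 = - PI) ->
  0 <= 1 - (y/PI)^2 <= Rabs (y - x0).
Proof.
  intros Hy Hx0. pose proof (qpos y Hy). pose proof PI2_3_2. pose proof PI_RGT_0.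
  apply Rabs_def2 in Hy.
  split; [lra|].
  assert (HF : (PI + y)/(PI*PI) <= 1 /\ (PI - y)/(PI*PI) <= 1).
  { split; apply (Rmult_le_reg_r (PI*PI)); try nra; unfold Rdiv;
    rewrite Rmult_assoc, Rinv_l, Rmult_1_r by nra; nra. }
  destruct Hx0 as [-> | ->].
  - replace (1 - (y/PI)^2) with ((PI - y) * ((PI + y) / (PI * PI))) by (field; lra).
    rewrite Rabs_minus_sym, Rabs_right by lra.
    destruct HF as [HF1 HF2]. set (F := (PI + y) / (PI * PI)) in *. nra.
  - replace (1 - (y/PI)^2) with ((y + PI) * ((PI - y) / (PI * PI))) by (field; lra).
    replace (y - - PI) with (y + PI) by ring. rewrite Rabs_right by lra.
    destruct HF as [HF1 HF2]. set (F := (PI - y) / (PI * PI)) in *. nra.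
Qed.

Lemma isd_const (c x : R) : is_derive (fun _ => c) x 0.
Proof. exact (is_derive_const c x). Qed.

Lemma Dz_deriv (k : nat) (x : R) : (k <= 5)%nat -> is_derive (Dz k) x (Dz (S k) x).
Proof.
  intros Hk. pose proof PI_RGT_0.
  destruct (Rtotal_order (Rabs x) PI) as [Hx|[Hx|Hx]].
  - apply (is_derive_ext_loc (fun t => Dint k t - cst k)).
    + generalize (loc_lt x Hx). apply filter_imp. intros t Ht.
      unfold Dz. destruct (Rlt_dec (Rabs t) PI); [reflexivity|contradiction].
    + unfold Dz. destruct (Rlt_dec (Rabs x) PI); [|contradiction].
      simpl cst. change (Dint (S k) x - 0) with (minus (Dint (S k) x) 0).
      apply (is_derive_minus (Dint k) (fun _ => cst k)).
      * apply Dint_deriv; auto.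
      * apply isd_const.
  - assert (Hx0 : x = PI \/ x = - PI).
    { destruct (Rcase_abs x) as [E|E]; [rewrite Rabs_left in Hx|rewrite Rabs_right in Hx]; lra. }
    assert (Dz (S k) x = 0).
    { unfold Dz. destruct (Rlt_dec (Rabs x) PI); [lra|]. simpl. ring. }
    rewrite H0.
    apply (deriv0 _ x (2 * exp 1 * INR (2*k+2) ^ (2*k+2) * 300000) 1); [lra| |].
    { assert (0 <= INR (2*k+2) ^ (2*k+2)) by (apply pow_le, pos_INR).
      pose proof (exp_pos 1). nra. }
    intros y Hy. unfold Dz.
    destruct (Rlt_dec (Rabs x) PI); [lra|].
    destruct (Rlt_dec (Rabs y) PI) as [Hy'|Hy'].
    + replace (Dint k y - cst k - - cst k) with (Dint k y) by ring.
      eapply Rle_trans. apply Dint_bound; auto.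
      pose proof (qle y x Hy' Hx0).
      assert ((1 - (y/PI)^2)^2 <= (y - x)^2).
      { rewrite <- (pow2_abs (y - x)). apply pow_incr. lra. }
      assert (0 <= INR (2*k+2) ^ (2*k+2)) by (apply pow_le, pos_INR).
      pose proof (exp_pos 1).
      apply Rmult_le_compat_l; [nra|auto].
    + replace (- cst k - - cst k) with 0 by ring. rewrite Rabs_R0.
      assert (0 <= INR (2*k+2) ^ (2*k+2)) by (apply pow_le, pos_INR).
      pose proof (exp_pos 1). pose proof (pow2_ge_0 (y - x)).
      apply Rmult_le_pos; [nra|auto].
  - apply (is_derive_ext_loc (fun _ => - cst k)).
    + generalize (loc_gt x Hx). apply filter_imp. intros t Ht.
      unfold Dz. destruct (Rlt_dec (Rabs t) PI); [lra|reflexivity].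
    + unfold Dz. destruct (Rlt_dec (Rabs x) PI); [lra|].
      simpl cst. replace (- 0) with 0 by ring. apply isd_const.
Qed.

Lemma DnDz (k : nat) (x : R) : (k <= 6)%nat -> Derive_n z1 k x = Dz k x.
Proof.
  revert x. induction k; intros x Hk.
  - simpl. unfold z1, Dz, Dint, cst. destruct (Rlt_dec (Rabs x) PI); simpl; [field|ring].
  - simpl. rewrite (Derive_ext _ (Dz k)) by (intros; apply IHk; lia).
    apply is_derive_unique. apply Dz_deriv. lia.
Qed.

Lemma eps_small : eps / PI <= /384.
Proof.
  pose proof PI2_3_2. pose proof PI_RGT_0. unfold eps.
  apply (Rmult_le_reg_r PI); [lra|]. field_simplify; lra.
Qed.

Lemma Dint_posL (k : nat) (x : R) : (k <= 6)%nat -> -PI < x <= -PI + eps -> 0 < Dint k x.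
Proof.
  intros Hk Hx. pose proof PI_RGT_0. pose proof eps_small. pose proof PI2_3_2.
  assert (Hax : Rabs x < PI) by (apply Rabs_def1; unfold eps in Hx; lra).
  pose proof (qpos x Hax).
  assert (Hu : -1 < x/PI <= -1 + /384).
  { split.
    - apply (Rmult_lt_reg_r PI); [lra|]. field_simplify; lra.
    - replace (x/PI) with (-1 + (x + PI)/PI) by (field; lra).
      assert ((x + PI)/PI <= eps/PI).
      { unfold Rdiv. apply Rmult_le_compat_r. left; apply Rinv_0_lt_compat; lra. lra. }
      lra. }
  pose proof (PsignL k _ Hk Hu).
  unfold Dint. apply Rdiv_lt_0_compat.
  - pose proof (exp_pos (1 - 1 / (1 - (x / PI) ^ 2))). nra.
  - apply Rmult_lt_0_compat; apply pow_lt; lra.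
Qed.

Lemma Dint_posR (k : nat) (x : R) : (k <= 6)%nat -> PI - eps <= x < PI -> 0 < (-1)^k * Dint k x.
Proof.
  intros Hk Hx. pose proof PI_RGT_0. pose proof eps_small. pose proof PI2_3_2.
  assert (Hax : Rabs x < PI) by (apply Rabs_def1; unfold eps in Hx; lra).
  pose proof (qpos x Hax).
  assert (Hu : 1 - /384 <= x/PI < 1).
  { split.
    - replace (x/PI) with (1 - (PI - x)/PI) by (field; lra).
      assert ((PI - x)/PI <= eps/PI).
      { unfold Rdiv. apply Rmult_le_compat_r. left; apply Rinv_0_lt_compat; lra. lra. }
      lra.
    - apply (Rmult_lt_reg_r PI); [lra|]. field_simplify; lra. }
  pose proof (PsignR k _ Hk Hu).
  unfold Dint.
  replace ((-1) ^ k * (2 * exp (1 - 1 / (1 - (x / PI) ^ 2)) * P k (x / PI) /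
     (PI ^ k * (1 - (x / PI) ^ 2) ^ (2 * k))))
   with (2 * exp (1 - 1 / (1 - (x / PI) ^ 2)) * ((-1)^k * P k (x / PI)) /
     (PI ^ k * (1 - (x / PI) ^ 2) ^ (2 * k))) by (unfold Rdiv; ring).
  apply Rdiv_lt_0_compat.
  - pose proof (exp_pos (1 - 1 / (1 - (x / PI) ^ 2))). nra.
  - apply Rmult_lt_0_compat; apply pow_lt; lra.
Qed.

Lemma mvt_Dint (k : nat) (a b : R) : (k <= 5)%nat -> a <= b -> -PI < a -> b < PI ->
  exists c, a <= c <= b /\ Dint k b - Dint k a = Dint (S k) c * (b - a).
Proof.
  intros Hk Hab Ha Hb.
  assert (Hin : forall c, a <= c <= b -> Rabs c < PI) by (intros; apply Rabs_def1; lra).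
  destruct (MVT_gen (Dint k) a b (Dint (S k))) as [c [Hc E]].
  - intros c Hc. rewrite Rmin_left, Rmax_right in Hc by lra. apply Dint_deriv; auto. apply Hin; lra.
  - intros c Hc. rewrite Rmin_left, Rmax_right in Hc by lra.
    apply continuity_pt_filterlim.
    apply (ex_derive_continuous (K:=R_AbsRing) (V:=R_NormedModule) (Dint k) c).
    exists (Dint (S k) c). apply Dint_deriv; auto.
  - rewrite Rmin_left, Rmax_right in Hc by lra. exists c. split; auto.
Qed.

Lemma between_of (a b v : R) : (a <= v <= b) \/ (b <= v <= a) -> between a b v.
Proof. unfold between, Rmin, Rmax. intros H. destruct (Rle_dec a b); lra. Qed.

Lemma neg1pow (k : nat) : (-1)^k = 1 \/ (-1)^k = -1.
Proof. induction k; simpl; [left; ring|]. destruct IHk as [-> | ->]; [right|left]; ring. Qed.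

Theorem corollary2 :
  forall k : nat, (k <= 5)%nat ->
    (forall x : R, -PI <= x <= -PI + eps ->
       between (Derive_n z1 k (-PI)) (Derive_n z1 k (-PI + eps)) (Derive_n z1 k x)) /\
    (forall x : R, PI - eps <= x <= PI ->
       between (Derive_n z1 k (PI - eps)) (Derive_n z1 k PI) (Derive_n z1 k x)).
Proof.
  intros k Hk. pose proof PI_RGT_0. pose proof PI2_3_2.
  assert (He : 0 < eps) by (unfold eps; lra).
  assert (He2 : eps < 1) by (unfold eps; lra).
  assert (Em : Dz k (-PI) = - cst k).
  { unfold Dz. rewrite Rabs_Ropp, Rabs_right by lra. destruct (Rlt_dec PI PI); [lra|auto]. }
  assert (Ep : Dz k PI = - cst k).
  { unfold Dz. rewrite Rabs_right by lra. destruct (Rlt_dec PI PI); [lra|auto]. }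
  assert (Din : forall y, -PI < y < PI -> Dz k y = Dint k y - cst k).
  { intros y Hy. unfold Dz. destruct (Rlt_dec (Rabs y) PI); auto.
    exfalso. apply n. apply Rabs_def1; lra. }
  split.
  - intros x Hx. rewrite !DnDz by lia. rewrite Em, (Din (-PI + eps)) by lra.
    destruct (Req_dec x (-PI)) as [->|Hne].
    { rewrite Em. apply between_of. left. pose proof (Dint_posL k (-PI+eps) ltac:(lia) ltac:(lra)). lra. }
    rewrite (Din x) by lra.
    pose proof (Dint_posL k x ltac:(lia) ltac:(lra)).
    destruct (mvt_Dint k x (-PI + eps) Hk ltac:(lra) ltac:(lra) ltac:(lra)) as [c [Hc E]].
    pose proof (Dint_posL (S k) c ltac:(lia) ltac:(lra)).
    apply between_of. left. nra.
  - intros x Hx. rewrite !DnDz by lia. rewrite Ep, (Din (PI - eps)) by lra.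
    destruct (Req_dec x PI) as [->|Hne].
    { rewrite Ep. pose proof (Dint_posR k (PI-eps) ltac:(lia) ltac:(lra)).
      apply between_of. destruct (neg1pow k) as [E|E]; rewrite E in H1; [right|left]; lra. }
    rewrite (Din x) by lra.
    pose proof (Dint_posR k x ltac:(lia) ltac:(lra)) as Hs.
    destruct (mvt_Dint k (PI - eps) x Hk ltac:(lra) ltac:(lra) ltac:(lra)) as [c [Hc E]].
    pose proof (Dint_posR (S k) c ltac:(lia) ltac:(lra)) as Hs'.
    simpl pow in Hs'.
    apply between_of. destruct (neg1pow k) as [E1|E1]; rewrite E1 in Hs, Hs'; [right|left]; nra.
Qed.
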